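(* For $r\in\mathbb{N}_0$ and $n\ge1$, the expected size $E^L_{n;r}$ of the $r$th fringe of a simple two-dimensional lattice path chosen uniformly at random among the $4^n$ paths of length $n$ is \[ E^L_{n;r}=4^{r+1-n}\sum_{\lambda\ge1}\frac{2\lambda^3+\lambda}{3}\bigg[\binom{2n-1}{n-2^r\lambda}-\binom{2n-1}{n-2^r\lambda-1}\bigg], \] where binomial coefficients with negative lower index are $0$.
   Context: A simple two-dimensional lattice path is a finite nonempty word over the steps $\{\uparrow,\rightarrow,\downarrow,\leftarrow\}$; its length $|\ell|$ is the number of steps. The reduction $\Phi_L(\ell)$ of a path $\ell$ of length $\ge2$: first, if the first step of $\ell$ is vertical, the entire path is rotated by $90^\circ$ clockwise; then, if the last step is horizontal, this last step alone is rotated by $90^\circ$ clockwise. The resulting path decomposes uniquely as $H_1V_1\cdots H_kV_k$ ($k\ge1$) with each $H_i$ a nonempty maximal run of horizontal steps and each $V_i$ a nonempty maximal run of vertical steps. Each block $H_iV_i$ is replaced by $\nearrow$, $\searrow$, $\swarrow$, $\nwarrow$ according as ($H_i$ starts with $\rightarrow$, $V_i$ with $\uparrow$), ($\rightarrow$, $\downarrow$), ($\leftarrow$, $\downarrow$), ($\leftarrow$, $\uparrow$); the diagonal path is then rotated by $45^\circ$ clockwise, giving $\Phi_L(\ell)$ of length $k$. The compactification degree $\mathrm{cdeg}(\ell)$ is the number $m\ge0$ such that $\Phi_L^m(\ell)$ is a single step. The size of the $r$th fringe of $\ell$ is $|\Phi_L^r(\ell)|$ if $\mathrm{cdeg}(\ell)\ge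 r$, and $0$ otherwise. *)

(* Defs.v *)
From HB Require Import structures.
From mathcomp Require Import all_boot all_order all_algebra.
Set Implicit Arguments. Unset Strict Implicit. Unset Printing Implicit Defensive.
Import Order.TTheory GRing.Theory Num.Theory.

Inductive step := Up | Right | Down | Left.

Definition step_to_ord (d : step) : 'I_4 :=
  match d with
  | Up => @Ordinal 4 0 isT | Right => @Ordinal 4 1 isT
  | Down => @Ordinal 4 2 isT | Left => @Ordinal 4 3 isT
  end.
Definition ord_to_step (i : 'I_4) : step :=
  match val i with 0 => Up | 1 => Right | 2 => Down | _ => Left end.
Lemma step_K : cancel step_to_ord ord_to_step.
Proof. by case. Qed.

HB.instance Definition _ := Finite.copy step (can_type step_K).

Definition path := seq step.

Definition vert (d : step) : bool := (d == Up) || (d == Down).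

Definition rot (d : step) : step :=
  match d with Up => Right | Right => Down | Down => Left | Left => Up end.

Definition norm_first (s : path) : path :=
  if s is x :: _ then (if vert x then map rot s else s) else s.

Definition norm_last (s : path) : path :=
  if s is x :: s' then
    (if vert (last x s') then s else rcons (belast x s') (rot (last x s')))
  else s.

Fixpoint runs (s : path) : seq path :=
  match s with
  | [::] => [::]
  | x :: s' =>
      match runs s' with
      | (y :: r) :: rs =>
          if vert x == vert y then (x :: y :: r) :: rs
          else [:: x] :: (y :: r) :: rs
      | _ => [:: [:: x]]
      end
  end.

(* block H V  ->  diagonal step, then rotated by 45 degrees clockwise:
   (->,up) NE -> Right, (->,down) SE -> Down, (<-,down) SW -> Left,
   (<-,up) NW -> Up *)
Definition diag (h v : step) : step :=
  match h, v with
  | Right, Up => Right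
  | Right, Down => Down
  | Left, Down => Left
  | Left, Up => Up
  | _, _ => Right (* does not occur *)
  end.

Fixpoint blocks (rs : seq path) : path :=
  match rs with
  | h :: v :: rs' => diag (head Right h) (head Up v) :: blocks rs'
  | _ => [::]
  end.

(* The reduction Phi_L (meaningful for paths of length >= 2). *)
Definition phiL (s : path) : path := blocks (runs (norm_last (norm_first s))).

(* compactification degree: the number m of reductions after which
   a single step remains (computed with sufficient fuel, since the
   length strictly decreases under phiL). *)
Fixpoint cdeg_aux (fuel : nat) (s : path) : nat :=
  match fuel with
  | 0 => 0
  | f.+1 => if size s <= 1 then 0 else (cdeg_aux f (phiL s)).+1
  end.
Definition cdeg (s : path) : nat := cdeg_aux (size s) s.

Definition fringe_size (r : nat) (s : path) : nat :=
  if r <= cdeg s then size (iter r phiL s) else 0.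

Local Open Scope ring_scope.

Definition expected_fringe (n r : nat) : rat :=
  (\sum_(t : n.-tuple step) (fringe_size r t)%:R) / (4 ^ n)%:R.

Definition binz (m : nat) (k : int) : rat :=
  if k < 0 then 0 else ('C(m, `|k|%N))%:R.

(* Main.v *)
Require Import Defs.
From mathcomp Require Import all_boot all_order all_algebra.
From mathcomp Require Import zify ring lra.
Import Order.TTheory GRing.Theory Num.Theory.
Local Open Scope ring_scope.

Definition Tp (s : seq step) : seq step := blocks (runs s).
Definition Up_ (s : seq step) : seq step := blocks (behead (runs s)).

Lemma runs_cons x s : runs (x :: s) =
  match runs s with
  | (y :: r) :: rs =>
      if vert x == vert y then (x :: y :: r) :: rs
      else [:: x] :: (y :: r) :: rs
  | _ => [:: [:: x]]
  end.
Proof. by []. Qed.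

Lemma runs_struct y t : exists r rs, runs (y :: t) = (y :: r) :: rs /\
  match rs with [::] => vert (last y t) = vert y
  | (z :: _) :: _ => vert z = ~~ vert y | [::] :: _ => False end.
Proof.
elim: t y => [|y' t IH] y; first by exists [::], [::].
have [r [rs [E H]]] := IH y'.
rewrite runs_cons E. case: eqP => Hv.
- exists (y' :: r), rs; split => //.
  by case: rs E H => [|[|z ?] ?] //= _; rewrite Hv.
- exists [::], ((y' :: r) :: rs); split => //.
  by move: Hv; case: (vert y); case: (vert y').
Qed.

Lemma runs_cons2 x y t : exists r rs, runs (y :: t) = (y :: r) :: rs /\
  runs (x :: y :: t) = if vert x == vert y then (x :: y :: r) :: rs
                       else [:: x] :: (y :: r) :: rs.
Proof.
have [r [rs [E _]]] := runs_struct y t.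
by exists r, rs; split => //; rewrite runs_cons E.
Qed.

Definition isA (s : seq step) := if s is y :: t then ~~ vert y && vert (last y t) else false.
Definition isB (s : seq step) := if s is y :: t then vert y && vert (last y t) else false.

Definition vdir (d : step) : step :=
  match d with Up | Right => Up | _ => Down end.

Lemma TA x y t : ~~ vert x -> isA (y :: t) ->
  Tp (x :: y :: t) = diag x (vdir (head Right (Tp (y :: t)))) :: behead (Tp (y :: t)).
Proof.
move=> Hx /andP [Hy Hl].
have [r [rs [E H]]] := runs_struct y t.
have [r' [rs' [E' E2]]] := runs_cons2 x y t.
rewrite E in E'; case: E' => ? ?; subst r' rs'.
rewrite /Tp E2 E.
have -> : (vert x == vert y) by rewrite (negbTE Hx) (negbTE Hy).
case: rs E H E2 => [|[|z r2] rs2] E H E2.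
- by move: Hl; rewrite H (negbTE Hy).
- by [].
- move: H => /= Hz.
  by case: x Hx {E2} => //; case: y Hy Hz {E Hl} => //; case: z.
Qed.

Lemma TB x y t : ~~ vert x -> isB (y :: t) ->
  Tp (x :: y :: t) = diag x y :: Up_ (y :: t).
Proof.
move=> Hx /andP [Hy _].
have [r [rs [E E2]]] := runs_cons2 x y t.
rewrite /Tp /Up_ E2 E.
by rewrite (negbTE Hx) Hy.
Qed.

Lemma UA x y t : vert x -> isA (y :: t) -> Up_ (x :: y :: t) = Tp (y :: t).
Proof.
move=> Hx /andP [Hy _].
have [r [rs [E E2]]] := runs_cons2 x y t.
rewrite /Tp /Up_ E2 E.
by rewrite Hx (negbTE Hy).
Qed.

Lemma UB x y t : vert x -> isB (y :: t) -> Up_ (x :: y :: t) = Up_ (y :: t).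
Proof.
move=> Hx /andP [Hy _].
have [r [rs [E E2]]] := runs_cons2 x y t.
rewrite /Tp /Up_ E2 E.
by rewrite Hx Hy.
Qed.

Definition steps4 := [:: Up; Right; Down; Left].
Fixpoint allw n : seq (seq step) :=
  if n is m.+1 then [seq x :: s | x <- steps4, s <- allw m] else [:: [::]].
Definition sum4 (f : step -> rat) := f Up + f Right + f Down + f Left.

Lemma allwS (F : seq step -> rat) n :
  \sum_(s <- allw n.+1) F s = \sum_(s <- allw n) sum4 (fun x => F (x :: s)).
Proof.
by rewrite /= !big_cat !big_map big_nil /sum4 !big_split /=; ring.
Qed.

Lemma mem_allw n s : (s \in allw n) = (size s == n).
Proof.
elim: n s => [|n IH] s; first by case: s.
apply/allpairsP/idP.
- by case=> [[x t]] /= [_ Ht ->]; rewrite /= eqSS -IH.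
- case: s => [|x s] //=; rewrite eqSS -IH => Hs.
  by exists (x, s); split => //; case: x.
Qed.

Lemma uniq_allw n : uniq (allw n).
Proof.
elim: n => [|n IH] //.
change (uniq [seq x :: s | x <- steps4, s <- allw n]).
apply: allpairs_uniq => //.
by move=> [x s] [y t] _ _ /= [-> ->].
Qed.

Definition W k (G : seq step -> rat) := \sum_(w <- allw k) G w.
Definition aS n (G : seq step -> rat) :=
  \sum_(s <- allw n) (if isA s then G (Tp s) else 0).
Definition bS n (H : step -> seq step -> rat) :=
  \sum_(s <- allw n) (if isB s then H (head Up s) (Up_ s) else 0).

Fixpoint cf m : (nat -> rat) * (nat -> rat) :=
  if m is m'.+1 then
    ((fun k => 2 * (cf m').1 k + (if k is k'.+1 then (cf m').2 k' else 0)),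
     (fun k => 2 * (cf m').2 k + (cf m').1 k))
  else ((fun _ => 0), (fun k => (k == 0)%:R)).
Definition alpha m k := (cf m).1 k.
Definition beta m k := (cf m).2 k.

Lemma alphaS m k : alpha m.+1 k = 2 * alpha m k + (if k is k'.+1 then beta m k' else 0).
Proof. by []. Qed.
Lemma betaS m k : beta m.+1 k = 2 * beta m k + alpha m k.
Proof. by []. Qed.

Lemma alpha0 m : alpha m 0 = 0.
Proof. by elim: m => [|m IH] //; rewrite alphaS IH; ring. Qed.

Lemma ab_supp m k : (m < k)%N -> alpha m k = 0 /\ beta m k = 0.
Proof.
elim: m k => [|m IH] [|k] //= Hk.
have [a1 b1] := IH k.+1 (ltnW Hk).
have [a2 b2] := IH k Hk.
by rewrite alphaS betaS a1 b1 b2; split; ring.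
Qed.

Definition G2 (G : seq step -> rat) w :=
  G (diag Right (vdir (head Right w)) :: behead w) + G (diag Left (vdir (head Right w)) :: behead w).
Definition H2 (G : seq step -> rat) y w := G (diag Right y :: w) + G (diag Left y :: w).

Lemma stepA G s : s != [::] ->
  sum4 (fun x => if isA (x :: s) then G (Tp (x :: s)) else 0) =
  (if isA s then G2 G (Tp s) else 0) + (if isB s then H2 G (head Up s) (Up_ s) else 0).
Proof.
case: s => [|y t] // _.
have HR : ~~ vert Right by []. have HL : ~~ vert Left by [].
rewrite /sum4 /=.
case Hl: (vert (last y t)); case Hy: (vert y) => /=.
- have HB : isB (y :: t) by rewrite /= Hl Hy.
  rewrite (TB _ _ _ HR HB) (TB _ _ _ HL HB) /H2 /=; ring.
- have HA : isA (y :: t) by rewrite /= Hl Hy.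
  rewrite (TA _ _ _ HR HA) (TA _ _ _ HL HA) /G2; ring.
- ring.
- ring.
Qed.

Definition H3 (H : step -> seq step -> rat) w := H Up w + H Down w.

Lemma stepB H s : s != [::] ->
  sum4 (fun x => if isB (x :: s) then H (head Up (x :: s)) (Up_ (x :: s)) else 0) =
  (if isA s then H3 H (Tp s) else 0) + (if isB s then (fun _ => H3 H) (head Up s) (Up_ s) else 0).
Proof.
case: s => [|y t] // _.
have HU : vert Up by []. have HD : vert Down by [].
rewrite /sum4 /=.
case Hl: (vert (last y t)); case Hy: (vert y) => /=.
- have HB : isB (y :: t) by rewrite /= Hl Hy.
  rewrite (UB _ _ _ HU HB) (UB _ _ _ HD HB) /H3; ring.
- have HA : isA (y :: t) by rewrite /= Hl Hy.
  rewrite (UA _ _ _ HU HA) (UA _ _ _ HD HA) /H3; ring.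
- ring.
- ring.
Qed.

Lemma nonempty_allw n s : s \in allw n.+1 -> s != [::].
Proof. by rewrite mem_allw; case: s. Qed.

Lemma aS_step n G : aS n.+2 G = aS n.+1 (G2 G) + bS n.+1 (H2 G).
Proof.
rewrite /aS /bS allwS -big_split /=; apply: eq_big_seq => s Hs.
by rewrite stepA // (nonempty_allw _ _ Hs).
Qed.

Lemma bS_step n H : bS n.+2 H = aS n.+1 (H3 H) + bS n.+1 (fun _ => H3 H).
Proof.
rewrite /aS /bS allwS -big_split /=; apply: eq_big_seq => s Hs.
by rewrite stepB // (nonempty_allw _ _ Hs).
Qed.

Lemma W_G2 k G : W k.+1 (G2 G) = 2 * W k.+1 G.
Proof.
rewrite /W !allwS mulr_sumr; apply: eq_bigr => s _.
rewrite /sum4 /G2 /=; ring.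
Qed.

Lemma W_H2 k G : W k (H2 G Up) + W k (H2 G Down) = W k.+1 G.
Proof.
rewrite /W allwS -big_split; apply: eq_bigr => s _.
rewrite /sum4 /H2 /=; ring.
Qed.

Lemma W_H3 k H : W k (H3 H) = W k (H Up) + W k (H Down).
Proof. by rewrite /W -big_split. Qed.

Lemma wordsAB m : forall N, (m < N)%N ->
  (forall G, aS m.+1 G = \sum_(0 <= k < N) alpha m k * W k G) /\
  (forall H, bS m.+1 H = \sum_(0 <= k < N) beta m k * (W k (H Up) + W k (H Down))).
Proof.
elim: m => [|m IH] N HN.
- split.
  + move=> G; rewrite /aS allwS big_seq1 /sum4 /=.
    rewrite big1 //; move=> k _; rewrite /alpha /=; ring.
  + move=> H; rewrite /bS allwS big_seq1 /sum4 /=.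
    case: N HN => [|N] // _; rewrite big_nat_recl // big1 /=.
    * rewrite /beta /= /W /= !big_seq1 /Up_ /=; ring.
    * by move=> k _; rewrite /beta /=; ring.
- case: N HN => [|N] // HN.
  have [IA IB] := IH N.+1 (ltnW HN).
  have [IA' IB'] := IH N HN.
  split.
  + move=> G; rewrite aS_step IA IB'.
    have -> : \sum_(0 <= k < N.+1) alpha m k * W k (G2 G) =
              \sum_(0 <= k < N.+1) 2 * alpha m k * W k G.
      rewrite big_nat_recl // [RHS]big_nat_recl // alpha0; congr (_ + _); first ring.
      by apply: eq_bigr => k _; rewrite W_G2; ring.
    rewrite [in RHS]big_nat_recl // alphaS alpha0.
    rewrite big_nat_recl // alpha0.
    under [in RHS]eq_bigr => i _ do rewrite alphaS mulrDl.
    rewrite big_split /=.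
    under [X in _ + X = _]eq_bigr => i _ do rewrite W_H2.
    ring.
  + move=> H; rewrite bS_step IA IB.
    rewrite -big_split /=; apply: eq_bigr => k _.
    rewrite betaS W_H3 /H3; ring.
Qed.

Lemma rot_inv n (K : seq step -> rat) :
  \sum_(s <- allw n) K (map Defs.rot s) = \sum_(s <- allw n) K s.
Proof.
elim: n K => [|n IH] K; first by rewrite /= !big_seq1.
rewrite !allwS.
transitivity (\sum_(s <- allw n) (fun t => sum4 (fun x => K (Defs.rot x :: t))) (map Defs.rot s)).
  by [].
rewrite (IH (fun t => sum4 (fun x => K (Defs.rot x :: t)))); apply: eq_bigr => s _; rewrite /sum4 /=; ring.
Qed.

Lemma allw_rcons n (K : seq step -> rat) :
  \sum_(s <- allw n.+1) K s = \sum_(s <- allw n) sum4 (fun x => K (rcons s x)).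
Proof.
elim: n K => [|n IH] K; first by rewrite allwS /= !big_seq1.
rewrite allwS (IH (fun s => sum4 (fun y => K (y :: s)))) [RHS]allwS.
apply: eq_bigr => s _; rewrite /sum4 /=; ring.
Qed.

Lemma NF_sum n (F : seq step -> rat) :
  \sum_(s <- allw n.+1) F (norm_first s) =
  2 * \sum_(s <- allw n) (F (Right :: s) + F (Left :: s)).
Proof.
rewrite allwS.
transitivity (\sum_(s <- allw n) ((fun t => F (Right :: t) + F (Left :: t)) (map Defs.rot s)
   + (F (Right :: s) + F (Left :: s)))).
  by apply: eq_bigr => s _; rewrite /sum4 /=; ring.
rewrite big_split (rot_inv n (fun t => F (Right :: t) + F (Left :: t))) /=; ring.
Qed.

Lemma NL_rcons y t x :
  norm_last (y :: rcons t x) = y :: rcons t (if vert x then x else Defs.rot x).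
Proof. by rewrite /norm_last last_rcons belast_rcons; case: (vert x). Qed.

Lemma isA_rcons y t x : isA (y :: rcons t x) = ~~ vert y && vert x.
Proof. by rewrite /= last_rcons. Qed.

Lemma phi_sum n (G : seq step -> rat) :
  \sum_(s <- allw n.+2) G (phiL s) = 4 * aS n.+2 G.
Proof.
rewrite /phiL (NF_sum n.+1 (fun u => G (Tp (norm_last u)))).
have E1 := allw_rcons n (fun s => sum4 (fun y => if isA (y :: s) then G (Tp (y :: s)) else 0)).
have E2 := allw_rcons n (fun s => G (Tp (norm_last (Right :: s))) + G (Tp (norm_last (Left :: s)))).
cbv beta in E1, E2.
rewrite E2 /aS allwS E1.
rewrite !mulr_sumr; apply: eq_bigr => t _.
rewrite /sum4 -!rcons_cons !NL_rcons !isA_rcons /=; ring.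
Qed.

Lemma size_norm_first s : size (norm_first s) = size s.
Proof. by case: s => [|x s] //=; case: (vert x) => //=; rewrite size_map. Qed.

Lemma size_norm_last s : size (norm_last s) = size s.
Proof. by case: s => [|x s] //=; case: ifP => // _; rewrite size_rcons size_belast. Qed.

Lemma size_runs s : (size (runs s) <= size s)%N.
Proof.
elim: s => [|x s IH] //; rewrite runs_cons.
case: (runs s) IH => [|[|y r] rs] //= IH; case: ifP => //= _; lia.
Qed.

Lemma size_blocks rs : (2 * size (blocks rs) <= size rs)%N.
Proof.
have: (size rs <= size rs)%N by [].
move: {2}(size rs) => m; elim: m rs => [|m IH] [|a [|b rs]] //= H.
have := IH rs; lia.
Qed.

Lemma size_phiL s : (0 < size s)%N -> (size (phiL s) < size s)%N.
Proof.
move=> H; have := size_blocks (runs (norm_last (norm_first s))).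
have := size_runs (norm_last (norm_first s)).
rewrite size_norm_last size_norm_first /phiL; lia.
Qed.

Lemma cdeg_aux_fuel f g s : (size s <= f)%N -> (size s <= g)%N -> cdeg_aux f s = cdeg_aux g s.
Proof.
elim: f g s => [|f IH] [|g] s //=.
- by move=> H _; case: ifP => //; rewrite leqn0 in H; rewrite (eqP H).
- by move=> _ H; case: ifP => //; rewrite leqn0 in H; rewrite (eqP H).
- move=> Hf Hg; case: ifP => // H1.
  have H0 : (0 < size s)%N by move: H1; case: (size s).
  have Hp := size_phiL s H0.
  congr (_.+1); apply: IH; lia.
Qed.

Lemma cdeg_step s : (1 < size s)%N -> cdeg s = (cdeg (phiL s)).+1.
Proof.
move=> H; rewrite /cdeg; case E: (size s) H => [|p] // H.
rewrite /= ifF; last by rewrite E; apply/negbTE; rewrite -ltnNge.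
congr (_.+1); apply: cdeg_aux_fuel => //.
have := size_phiL s; rewrite E; lia.
Qed.

Lemma fringe_step r s : (1 < size s)%N -> fringe_size r.+1 s = fringe_size r (phiL s).
Proof.
by move=> H; rewrite /fringe_size (cdeg_step _ H) ltnS iterSr.
Qed.

Lemma cdeg_small s : (size s <= 1)%N -> cdeg s = 0%N.
Proof. by rewrite /cdeg; case E: (size s) => [|[|p]] //= _; rewrite E. Qed.

Lemma fringe_small r s : (size s <= 1)%N -> fringe_size r.+1 s = 0%N.
Proof. by move=> H; rewrite /fringe_size (cdeg_small _ H). Qed.

Definition E r n := \sum_(s <- allw n) (fringe_size r s)%:R : rat.

Lemma sum_const_allw (c : rat) n : \sum_(s <- allw n) c = c * 4%:R ^+ n.
Proof.
elim: n c => [|n IH] c; first by rewrite big_seq1 expr0 mulr1.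
rewrite allwS; transitivity (\sum_(s <- allw n) (4%:R * c)).
  by apply: eq_bigr => s _; rewrite /sum4; ring.
rewrite IH exprS; ring.
Qed.

Lemma E0 n : E 0 n = n%:R * 4%:R ^+ n.
Proof.
rewrite /E -sum_const_allw; apply: eq_big_seq => s.
by rewrite mem_allw /fringe_size /= => /eqP ->.
Qed.

Lemma E_step r n : E r.+1 n.+2 = 4 * \sum_(0 <= k < n.+2) alpha n.+1 k * E r k.
Proof.
rewrite /E.
have E1 := phi_sum n (fun w => (fringe_size r w)%:R : rat); cbv beta in E1.
transitivity (\sum_(s <- allw n.+2) (fringe_size r (phiL s))%:R : rat).
  apply: eq_big_seq => s; rewrite mem_allw => /eqP H.
  by rewrite fringe_step // H.
rewrite E1; congr (_ * _).
by have [-> _] := wordsAB n.+1 n.+2 (ltnSn _).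
Qed.

Lemma E_small r n : (n <= 1)%N -> E r.+1 n = 0.
Proof.
move=> Hn; rewrite /E big_seq big1 // => s; rewrite mem_allw => /eqP H.
by rewrite fringe_small // H.
Qed.

Definition d (n : nat) (i : int) : rat :=
  binz (2 * n - 1) (n%:Z - i) - binz (2 * n - 1) (n%:Z - i - 1).

Lemma binz_neg m t : t < 0 -> binz m t = 0.
Proof. by move=> H; rewrite /binz H. Qed.

Lemma binzS m t : binz m.+1 t = binz m t + binz m (t - 1).
Proof.
case: t => [[|k]|k].
- rewrite (binz_neg m (Posz 0 - 1)) //; rewrite /binz /= !bin0; ring.
- have -> : (k.+1)%:Z - 1 = k%:Z by lia.
  by rewrite /binz /= binS natrD addrC.
- rewrite NegzE !binz_neg //; lia.
Qed.

Lemma binz2 m t : binz m.+2 t = binz m t + 2 * binz m (t - 1) + binz m (t - 2).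
Proof.
rewrite !binzS.
have -> : t - 1 - 1 = t - 2 by lia.
ring.
Qed.

Lemma d_exp k i : (0 < k)%N -> d k.+1 i = d k (i - 1) + 2 * d k i + d k (i + 1).
Proof.
case: k => [|p] // _; rewrite /d.
have -> : (2 * p.+2 - 1 = (2 * p.+1 - 1).+2)%N by lia.
set m := (2 * p.+1 - 1)%N.
rewrite !binz2.
have -> : (p.+2)%:Z - i - 1 - 2 = (p.+1)%:Z - i - 2 by lia.
have -> : (p.+2)%:Z - i - 1 - 1 = (p.+1)%:Z - i - 1 by lia.
have -> : (p.+2)%:Z - i - 2 = (p.+1)%:Z - i - 1 by lia.
have -> : (p.+2)%:Z - i - 1 = (p.+1)%:Z - i by lia.
have -> : (p.+2)%:Z - i = (p.+1)%:Z - i + 1 by lia.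
have -> : (p.+1)%:Z - (i - 1) - 1 = (p.+1)%:Z - i by lia.
have -> : (p.+1)%:Z - (i - 1) = (p.+1)%:Z - i + 1 by lia.
have -> : (p.+1)%:Z - (i + 1) - 1 = (p.+1)%:Z - i - 2 by lia.
have -> : (p.+1)%:Z - (i + 1) = (p.+1)%:Z - i - 1 by lia.
ring.
Qed.

Lemma binz1 t : binz 1 t = (t == 0)%:R + (t == 1)%:R.
Proof.
case: t => [[|[|k]]|k]; rewrite /binz //=.
Qed.

Lemma d1 i : d 1 i = (i == 1)%:R - (i == -1)%:R.
Proof.
rewrite /d /= !binz1.
have -> : (1 - i == 0) = (i == 1) by apply/eqP/eqP; lia.
have -> : (1 - i == 1) = (i == 0) by apply/eqP/eqP; lia.
have -> : (1 - i - 1 == 0) = (i == 0) by apply/eqP/eqP; lia.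
have -> : (1 - i - 1 == 1) = (i == -1) by apply/eqP/eqP; lia.
ring.
Qed.

Lemma d_vanish n i : n%:Z < i -> d n i = 0.
Proof. by move=> H; rewrite /d !binz_neg; [ring|lia|lia]. Qed.

Lemma d_zero n : (0 < n)%N -> d n 0 = 0.
Proof.
case: n => [|p] // _; rewrite /d.
have -> : (p.+1)%:Z - 0 = (p.+1)%:Z by lia.
have -> : (p.+1)%:Z - 1 = p%:Z by lia.
rewrite /binz /=.
have -> : (2 * p.+1 - 1 = p + p.+1)%N by lia.
by rewrite -[X in 'C(_, X)](addKn p p.+1) bin_sub ?leq_addr // subrr.
Qed.

Lemma IJ m : forall j : int,
  \sum_(0 <= k < m.+1) alpha m k * d k j = d m.+1 (2 * j) /\
  \sum_(0 <= k < m.+1) beta m k * d k.+1 j = d m.+2 (2 * j) - 2 * d m.+1 (2 * j).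
Proof.
elim: m => [|m IH] j.
- rewrite !big_nat1 alpha0 (d_exp 1) // !d1.
  have -> : (2 * j == 1) = false by apply/eqP; lia.
  have -> : (2 * j == -1) = false by apply/eqP; lia.
  have -> : (2 * j - 1 == 1) = (j == 1) by apply/eqP/eqP; lia.
  have -> : (2 * j - 1 == -1) = (j == 0) by apply/eqP/eqP; lia.
  have -> : (2 * j + 1 == 1) = (j == 0) by apply/eqP/eqP; lia.
  have -> : (2 * j + 1 == -1) = (j == -1) by apply/eqP/eqP; lia.
  split; rewrite /beta /=; ring.
- have [Hs1 Hs2] := ab_supp m m.+1 (ltnSn m).
  split.
  + rewrite big_nat_recl // alphaS alpha0.
    under eq_bigr => i _ do rewrite alphaS /= mulrDl.
    rewrite big_split /= (IH j).2.
    rewrite big_nat_recr //= Hs1.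
    have := (IH j).1; rewrite big_nat_recl // alpha0 => H1.
    rewrite (eq_bigr (fun i => 2 * (alpha m i.+1 * d i.+1 j))); last by move=> i _; ring.
    rewrite -mulr_sumr.
    have -> : \sum_(0 <= i < m) alpha m i.+1 * d i.+1 j = d m.+1 (2 * j).
      by rewrite -H1; ring.
    ring.
  + under eq_bigr => i _ do rewrite betaS mulrDl -mulrA.
    rewrite big_split /= -mulr_sumr.
    rewrite (big_nat_recr m.+1 0 (fun i => beta m i * d i.+1 j)) //= Hs2.
    rewrite (big_nat_recr m.+1 0 (fun i => alpha m i * d i.+1 j)) //= Hs1 (IH j).2.
    have -> : \sum_(0 <= i < m.+1) alpha m i * d i.+1 j =
       \sum_(0 <= i < m.+1) (alpha m i * d i (j - 1) + 2 * (alpha m i * d i j)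
                             + alpha m i * d i (j + 1)).
      apply: eq_bigr => [[|i]] _; first by rewrite alpha0; ring.
      rewrite d_exp //; ring.
    rewrite !big_split /= -mulr_sumr (IH (j - 1)).1 (IH j).1 (IH (j + 1)).1.
    rewrite (d_exp m.+2 (2 * j)) // (d_exp m.+1 (2 * j - 1)) // (d_exp m.+1 (2 * j)) //.
    rewrite (d_exp m.+1 (2 * j + 1)) //.
    have -> : 2 * j - 1 - 1 = 2 * (j - 1) by ring.
    have -> : 2 * j - 1 + 1 = 2 * j by ring.
    have -> : 2 * j + 1 - 1 = 2 * j by ring.
    have -> : 2 * j + 1 + 1 = 2 * (j + 1) by ring.
    ring.
Qed.

Lemma shift_sum N (f : nat -> rat) (X : int -> rat) :
  f 0%N = 0 -> X 0 = 0 -> (forall i : nat, (N < i)%N -> X i%:Z = 0) ->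
  \sum_(0 <= l < N.+2) f l * (X (l%:Z - 1) + 2 * X l%:Z + X (l%:Z + 1)) =
  \sum_(0 <= l < N.+2) (f l.+1 + 2 * f l + f l.-1) * X l%:Z.
Proof.
move=> f0 X0 XN.
rewrite (eq_bigr (fun l => f l * X (l%:Z - 1) + 2 * (f l * X l%:Z) + f l * X (l%:Z + 1)));
  last by move=> l _; ring.
rewrite [RHS](eq_bigr (fun l => f l.+1 * X l%:Z + 2 * (f l * X l%:Z) + f l.-1 * X l%:Z));
  last by move=> l _; ring.
rewrite !big_split /=.
have -> : \sum_(0 <= l < N.+2) f l * X (l%:Z - 1) = \sum_(0 <= l < N.+2) f l.+1 * X l%:Z.
  rewrite big_nat_recl // f0 mul0r add0r [RHS]big_nat_recr //= XN // mulr0 addr0.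
  by apply: eq_bigr => i _; congr (_ * X _); lia.
have -> : \sum_(0 <= l < N.+2) f l * X (l%:Z + 1) = \sum_(0 <= l < N.+2) f l.-1 * X l%:Z.
  rewrite big_nat_recr // [RHS]big_nat_recl //= X0 mulr0 add0r.
  have -> : (N.+1)%:Z + 1 = (N.+2)%:Z by lia.
  rewrite XN // mulr0 addr0.
  by apply: eq_bigr => i _; congr (_ * X _); lia.
done.
Qed.

Lemma natS (k : nat) : (k.+1)%:R = k%:R + 1 :> rat.
Proof. by rewrite -addn1 natrD. Qed.

Definition w (l : nat) : rat := (2 * l ^ 3 + l)%:R / 3.
Definition Tn n := \sum_(0 <= l < n.+1) l%:R * d n l%:Z.
Definition S0 n := \sum_(0 <= l < n.+1) w l * d n l%:Z.

Lemma d_shift_hyps m : d m.+1 0 = 0 /\ (forall i : nat, (m.+1 < i)%N -> d m.+1 i%:Z = 0).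
Proof. split; first by rewrite d_zero. by move=> i Hi; apply: d_vanish; lia. Qed.

Lemma sum2 (F : nat -> rat) : \sum_(0 <= l < 2) F l = F 0%N + F 1%N.
Proof. by rewrite big_nat_recr // big_nat_recr // big_geq //= add0r. Qed.

Lemma T_S0 m : Tn m.+1 = 4 ^+ m /\ S0 m.+1 = m.+1%:R * 4 ^+ m.
Proof.
elim: m => [|m [IT IS]].
  have e0 : (2 * 0 ^ 3 + 0 = 0)%N by []. have e1 : (2 * 1 ^ 3 + 1 = 3)%N by [].
  rewrite /Tn /S0 !sum2 (d_zero 1 isT) d1 /w /= e0 e1; split. field. done. field. done.
- have [X0 XN] := d_shift_hyps m.
  split.
  + rewrite /Tn.
    under eq_bigr => l _ do rewrite (d_exp m.+1 _ isT).
    have H := shift_sum m.+1 (fun l => l%:R) (d m.+1) (erefl _) X0 XN; cbv beta in H.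
    rewrite H.
    rewrite (eq_bigr (fun l => 4 * (l%:R * d m.+1 l%:Z))); last first.
      move=> [|l] _ /=; first by rewrite X0; ring.
      rewrite (natS l.+1) (natS l); ring.
    rewrite -mulr_sumr (big_nat_recr m.+2 0 _ (leq0n _)) /= (XN m.+2 (ltnSn _)) mulr0 addr0.
    by rewrite -/(Tn m.+1) IT exprS.
  + rewrite /S0.
    under eq_bigr => l _ do rewrite (d_exp m.+1 _ isT).
    have w0 : w 0 = 0.
      have e0 : (2 * 0 ^ 3 + 0 = 0)%N by [].
      by rewrite /w e0 mul0r.
    rewrite (shift_sum m.+1 w (d m.+1) w0 X0 XN).
    rewrite (eq_bigr (fun l => 4 * (w l * d m.+1 l%:Z) + 4 * (l%:R * d m.+1 l%:Z))); last first.
      move=> [|l] _ /=; first by rewrite X0; ring.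
      by rewrite /w !(natrD, natrM, natrX) (natS l.+1) (natS l); field.
    rewrite big_split -!mulr_sumr /=.
    rewrite (big_nat_recr m.+2 0 _ (leq0n _)) /= (XN m.+2 (ltnSn _)) mulr0 addr0.
    rewrite (big_nat_recr m.+2 0 _ (leq0n _)) /= (XN m.+2 (ltnSn _)) mulr0 addr0.
    rewrite -/(Tn m.+1) -/(S0 m.+1) IT IS exprS.
    rewrite (natS m.+1) (natS m); ring.
Qed.

Definition Sr r n := \sum_(1 <= l < n.+1) w l * d n (2 ^ r * l)%:Z.

Lemma Sr_ext r k N : (k <= N)%N ->
  Sr r k = \sum_(1 <= l < N.+1) w l * d k (2 ^ r * l)%:Z.
Proof.
move=> H.
have H1 : (1 <= k.+1)%N by [].
have H2 : (k.+1 <= N.+1)%N by [].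
rewrite /Sr (big_cat_nat H1 H2) /=.
rewrite [X in _ = _ + X]big_nat_cond [X in _ = _ + X]big1 ?addr0 //.
move=> l /andP [/andP [Hl _] _].
rewrite d_vanish ?mulr0 //.
have : (l <= 2 ^ r * l)%N by rewrite leq_pmull // expn_gt0.
move: (2 ^ r * l)%N => q; lia.
Qed.

Lemma S0_Sr n : (0 < n)%N -> Sr 0 n = S0 n.
Proof.
move=> _; rewrite /Sr /S0 (@big_nat_recl _ _ _ n 0 _ (leq0n n)) /w.
have e0 : (2 * 0 ^ 3 + 0 = 0)%N by [].
rewrite e0 mulr0n !mul0r add0r big_add1 /=.
by apply: eq_bigr => i _; rewrite expn0 mul1n.
Qed.

Lemma E_closed r n : (0 < n)%N -> E r n = 4 ^+ r.+1 * Sr r n.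
Proof.
elim: r n => [|r IH] n Hn.
- rewrite E0 (S0_Sr _ Hn).
  case: n Hn => [|m] // _.
  have [_ ->] := T_S0 m.
  rewrite exprS; ring.
- case: n Hn => [|[|m]] // _.
  + rewrite E_small; last by [].
    rewrite /Sr big_nat1 d_vanish ?mulr0; first by [].
    have : (2 <= 2 ^ r.+1 * 1)%N by rewrite muln1 expnS leq_pmulr // expn_gt0.
    move: (2 ^ r.+1 * 1)%N => q; lia.
  + rewrite E_step.
    rewrite (eq_bigr (fun k => 4 ^+ r.+1 * (alpha m.+1 k * Sr r k))); last first.
      move=> [|k] _; first by rewrite alpha0; ring.
      by rewrite IH //; ring.
    rewrite -mulr_sumr.
    rewrite (eq_big_nat _ _ (F2 := fun k => alpha m.+1 k *
              \sum_(1 <= l < m.+3) w l * d k (2 ^ r * l)%:Z)); last first.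
      by move=> k /andP [_ Hk]; rewrite (Sr_ext r k m.+2) //; apply: ltnW.
    under eq_bigr => k _ do rewrite mulr_sumr.
    rewrite exchange_big /=.
    rewrite /Sr.
    rewrite (eq_bigr (fun l => w l * d m.+2 (2 ^ r.+1 * l)%:Z)); last first.
      move=> l _.
      rewrite (eq_bigr (fun k => w l * (alpha m.+1 k * d k (2 ^ r * l)%:Z))); last first.
        by move=> k _; ring.
      rewrite -mulr_sumr (IJ m.+1 _).1.
      by rewrite expnS -mulnA PoszM.
    by rewrite [4 ^+ r.+2]exprS mulrA.
Qed.

Lemma tuple_sum n (F : seq step -> rat) :
  \sum_(t : n.-tuple step) F t = \sum_(s <- allw n) F s.
Proof.
rewrite -(big_map (fun t : n.-tuple step => tval t) xpredT F).
apply: perm_big; apply: uniq_perm.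
- by rewrite map_inj_uniq ?index_enum_uniq //; apply: val_inj.
- exact: uniq_allw.
- move=> s; rewrite mem_allw; apply/mapP/idP.
  + by case=> t _ ->; rewrite size_tuple.
  + move=> /eqP H; exists (Tuple (introT eqP H)) => //.
    exact: mem_index_enum.
Qed.

Theorem proposition6 (n r : nat) : (1 <= n)%N ->
  expected_fringe n r =
  (4 : rat) ^ ((r.+1)%:Z - n%:Z) *
  \sum_(1 <= l < n.+1)
     ((2 * l ^ 3 + l)%:R / 3 *
      (binz (2 * n - 1) (n%:Z - (2 ^ r * l)%:Z)
       - binz (2 * n - 1) (n%:Z - (2 ^ r * l)%:Z - 1))).
Proof.
move=> Hn.
rewrite /expected_fringe (tuple_sum n (fun s => (fringe_size r s)%:R)).
rewrite -/(E r n) (E_closed r n Hn) -/(Sr r n).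
rewrite expfzDr // natrX.
change ((4 : rat) ^ (r.+1)%:Z) with ((4 : rat) ^+ r.+1).
rewrite -exprnN; field.
by rewrite expf_neq0.
Qed.
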